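(* Let $n\ge 2$ be an integer, $A\subseteq L_n$, and let $B\subseteq L_n\setminus A$ be a closed uncountable subset of $(L_n,\tau_E|_{L_n})$ (for example, a subset homeomorphic to the Cantor set). Then $(X_n,\tau(A))$ is not Lindelöf.
   Context: For $\overline{x},\overline{a}\in\mathbb R^n$ let $|\overline{x}-\overline{a}|$ be the Euclidean distance and $B(\overline{a},\epsilon)=\{\overline{x}\in\mathbb R^n:|\overline{x}-\overline{a}|<\epsilon\}$. Let $P_n=\{\overline{x}\in\mathbb R^n: x_n>0\}$, $L_n=\{\overline{x}\in\mathbb R^n: x_n=0\}$, $X_n=P_n\cup L_n$, and let $\tau_E$ denote the Euclidean topology on $X_n$. For $\overline{a}\in L_n$ and $\epsilon>0$ put $\overline{a(\epsilon)}=(a_1,\dots,a_{n-1},\epsilon)$ and $\tilde B(\overline{a},\epsilon)=\{\overline{a}\}\cup B(\overline{a(\epsilon)},\epsilon)$. For $A\subseteq L_n$, the topology $\tau(A)$ on $X_n$ is generated by the local bases: at $\overline{a}\in P_n$, the sets $B(\overline{a},\epsilon)$ with $0<\epsilon<a_n$; at $\overline{a}\in A$, the sets $B(\overline{a},\epsilon)\cap X_n$ with $\epsilon>0$; at $\overline{a}\in L_n\setminus A$, the sets $\tilde B(\overline{a},\epsilon)$ with $\epsilon>0$. *)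

(* Defs.v *)
From HB Require Import structures.
From mathcomp Require Import all_boot all_order all_algebra.
From mathcomp Require Import all_classical all_reals.
From mathcomp Require Import Rstruct.
From Stdlib Require Import Rdefinitions.
Set Implicit Arguments. Unset Strict Implicit. Unset Printing Implicit Defensive.
Import Order.TTheory GRing.Theory Num.Theory.
Local Open Scope classical_set_scope.
Local Open Scope ring_scope.

(* Points of R^n : coordinates indexed by 'I_n (coordinate x_k is x (k-1)). *)
Definition pt (n : nat) := 'I_n -> Rdefinitions.R.

Definition edist n (x a : pt n) : R := Num.sqrt (\sum_(i < n) (x i - a i) ^+ 2).

Definition eball n (a : pt n) (eps : R) : set (pt n) := [set x | edist x a < eps].

(* last coordinate x_n (index n-1); for n = 0 it is 0 by convention, irrelevant here *)
Definition lastc n (x : pt n) : R :=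
  match (insub n.-1 : option 'I_n) with Some i => x i | None => 0 end.

Definition Pn n : set (pt n) := [set x | 0 < lastc x].
Definition Ln n : set (pt n) := [set x | lastc x = 0].
Arguments Pn : clear implicits.
Arguments Ln : clear implicits.
Definition Xn n : set (pt n) := Pn n `|` Ln n.
Arguments Xn : clear implicits.

Definition shift_up n (a : pt n) (eps : R) : pt n :=
  fun i => if val i == n.-1 then eps else a i.

Definition tball n (a : pt n) (eps : R) : set (pt n) :=
  [set a] `|` eball (shift_up a eps) eps.

Definition basic_nbhd n (A : set (pt n)) (a : pt n) (V : set (pt n)) : Prop :=
  (Pn n a /\ exists eps : R, 0 < eps /\ eps < lastc a /\ V = eball a eps)
  \/ (A a /\ exists eps : R, 0 < eps /\ V = eball a eps `&` Xn n)
  \/ (Ln n a /\ ~ A a /\ exists eps : R, 0 < eps /\ V = tball a eps).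

Definition tau_open n (A : set (pt n)) (U : set (pt n)) : Prop :=
  U `<=` Xn n /\
  forall a, U a -> exists V, basic_nbhd A a V /\ V `<=` U.

Definition tau_Lindelof n (A : set (pt n)) : Prop :=
  forall C : set (set (pt n)),
    (forall U, C U -> tau_open A U) ->
    Xn n `<=` \bigcup_(U in C) U ->
    exists D : set (set (pt n)),
      D `<=` C /\ countable D /\ Xn n `<=` \bigcup_(U in D) U.

Definition closed_in_Ln n (B : set (pt n)) : Prop :=
  B `<=` Ln n /\
  forall x, Ln n x -> ~ B x ->
    exists eps : R, 0 < eps /\ eball x eps `&` Ln n `&` B = set0.

(* Main.v *)
Require Import Defs.
From HB Require Import structures.
From mathcomp Require Import all_boot all_order all_algebra.
From mathcomp Require Import all_classical all_reals.
From mathcomp Require Import Rstruct.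
From Stdlib Require Import Rdefinitions.
From mathcomp Require Import lra.
Set Implicit Arguments. Unset Strict Implicit.
Import Order.TTheory GRing.Theory Num.Theory.
Local Open Scope classical_set_scope.
Local Open Scope ring_scope.

Definition hlf (x : R) : R := @GRing.mul R x (GRing.inv (2%:R)).
Definition one : R := GRing.one R.

Lemma coord_le n (x a : pt n) (i : 'I_n) : `|x i - a i| <= edist x a.
Proof.
rewrite /edist -sqrtr_sqr; apply: ler_wsqrtr.
rewrite (bigD1 i) //= lerDl; apply: sumr_ge0 => j _; exact: sqr_ge0.
Qed.

Lemma lastc_le n (x a : pt n) : `|lastc x - lastc a| <= edist x a.
Proof.
rewrite /lastc; case: insubP => [i _ _|_]; first exact: coord_le.
by rewrite subr0 normr0 /edist sqrtr_ge0.
Qed.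

Lemma lastc_shift n (a : pt n) (e : R) : leq 1 n -> lastc (shift_up a e) = e.
Proof.
move=> n0; rewrite /lastc; case: insubP => [i _ Hi|].
  by rewrite /shift_up Hi eqxx.
by rewrite ltn_predL n0.
Qed.

Lemma ball_Pn n (a x : pt n) (eps : R) : eps <= lastc a -> eball a eps x -> Pn n x.
Proof.
move=> he; rewrite /eball /Pn /= => hx.
have := lastc_le x a; rewrite distrC => h.
have := ler_norm (lastc a - lastc x) => h2.
lra.
Qed.

Lemma tball_Pn n (a x : pt n) (e : R) : leq 1 n -> eball (shift_up a e) e x -> Pn n x.
Proof.
move=> n0 hx; apply: (ball_Pn _ hx); by rewrite lastc_shift.
Qed.

Theorem mainTheorem14 (n : nat) (A B : set (pt n)) :
  leq 2 n ->
  A `<=` Ln n ->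
  B `<=` Ln n `\` A ->
  closed_in_Ln B ->
  ~ countable B ->
  ~ tau_Lindelof A.
Proof.
move=> hn hA hB [hBL hcl] hnc hL.
have n0 : leq 1 n by apply: leq_trans hn.
have PnL : forall x, Pn n x -> ~ Ln n x.
  by rewrite /Pn /Ln /= => x h1 h2; rewrite h2 ltxx in h1.
have Pnbas : forall a, Pn n a -> basic_nbhd A a (eball a (hlf (lastc a))).
  move=> a Pa; left; split => //; exists (hlf (lastc a)).
  move: Pa; rewrite /Pn /hlf /= => Pa; split; first lra; split => //; lra.
have Pnsub : forall a, Pn n a -> eball a (hlf (lastc a)) `<=` Pn n.
  move=> a Pa x hx; apply: (ball_Pn _ hx); move: Pa; rewrite /Pn /hlf /= => Pa; lra.
pose C := [set U | U = Xn n `\` B \/ exists b, B b /\ U = [set b] `|` Pn n].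
have [D [DC [cD covD]]] : exists D, D `<=` C /\ countable D /\ Xn n `<=` \bigcup_(U in D) U.
  apply: hL.
  - move=> U [->|[b [Bb ->]]].
    + split; first by move=> x [].
      move=> a [Xa nBa]; case: (Xa) => [Pa|La].
        exists (eball a (hlf (lastc a))); split; first exact: Pnbas.
        move=> x hx; have Px := Pnsub _ Pa _ hx; split; first by left.
        by move=> /hBL /(PnL _ Px).
      have [Aa|nAa] := pselect (A a).
        have [eps [eps0 heps]] := hcl a La nBa.
        exists (eball a eps `&` Xn n); split.
          by right; left; split => //; exists eps.
        move=> x [hx Xx]; split => // Bx.
        have : (eball a eps `&` Ln n `&` B) x by split => //; split => //; exact: hBL.
        by rewrite heps.
      exists (tball a one); split.
        by right; right; split => //; split => //; exists one.
      move=> x [->|hx]; first by split.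
      have Px := tball_Pn n0 hx; split; first by left.
      by move=> /hBL /(PnL _ Px).
    + have [Lb nAb] := hB b Bb.
      split; first by move=> x [->|Px]; [right|left].
      move=> a [->|Pa].
        exists (tball b one); split.
          by right; right; split => //; split => //; exists one.
        move=> x [->|hx]; first by left.
        by right; exact: tball_Pn n0 hx.
      exists (eball a (hlf (lastc a))); split; first exact: Pnbas.
      by move=> x hx; right; exact: Pnsub _ Pa _ hx.
  - move=> x Xx; have [Bx|nBx] := pselect (B x).
      exists ([set x] `|` Pn n); last by left.
      by right; exists x.
    by exists (Xn n `\` B) => //; left.
apply: hnc.
pose f := fun b : pt n => [set b] `|` Pn n.
have finj : {in B &, injective f}.
  move=> b1 b2; rewrite !inE => B1 B2 e.
  have : f b2 b1 by rewrite -e; left.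
  case => // P1; exfalso; apply: (PnL _ P1); exact: hBL.
apply: (sub_countable _ cD).
apply: (card_le_trans (B := f @` B)).
  by have /card_eqPle[] := inj_card_eq finj.
apply: subset_card_le => _ [b Bb <-].
have [U DU Ub] := covD b (or_intror (hBL _ Bb)).
have := DC _ DU; case => [eU|[b' [Bb' eU]]].
  by move: Ub; rewrite eU => -[].
move: Ub; rewrite eU => -[eb|Pb]; last first.
  by exfalso; apply: (PnL _ Pb); exact: hBL.
by rewrite /f eb -eU.
Qed.
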